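(* Let $\mathcal{H}$ be a connected $k$-uniform hypergraph on $n$ vertices with degrees $d_1,\dots,d_n$, and let $b_{i}>0$ for each $1\leq i\leq n$. For $1\le p\le n$ put \[ b_{p}^{\prime}=b_{p}^{-(k-1)}\sum_{\{p,p_{2},\cdots,p_{k}\}\in E(\mathcal{H})}b_{p_{2}}\cdots b_{p_{k}}. \] Then \[ \rho(\mathcal{Q}(\mathcal{H}))\leq\max_{e\in E(\mathcal{H})}\max_{\{i,j\}\subseteq e}\frac{d_{i}+d_{j}+\sqrt{(d_{i}-d_{j})^{2}+4b_{i}^{\prime}b_{j}^{\prime}}}{2}. \]
   Context: A $k$-uniform hypergraph $\mathcal{H}$ on vertex set $[n]$ has edges that are $k$-element subsets of $[n]$; $d_i$ is the number of edges containing vertex $i$. The sum over $\{p,p_2,\dots,p_k\}\in E(\mathcal{H})$ runs over the edges containing $p$, with $p_2,\dots,p_k$ the other vertices of that edge. The adjacency tensor $\mathcal{A}(\mathcal{H})$ has entries $\mathcal{A}_{i_1\cdots i_k}=\frac{1}{(k-1)!}$ if $\{i_1,\dots,i_k\}\in E(\mathcal{H})$ and $0$ otherwise; $\mathcal{D}(\mathcal{H})$ is the diagonal tensor with $\mathcal{D}_{i\cdots i}=d_i$; $\mathcal{Q}(\mathcal{H})=\mathcal{D}(\mathcal{H})+\mathcal{A}(\mathcal{H})$ is the signless Laplacian tensor. For a tensor $\mathcal{T}$ and $x\in\mathbb{C}^n$, $(\mathcal{T}x)_i=\sum_{i_2,\dots,i_k}\mathcal{T}_{ii_2\cdots i_k}x_{i_2}\cdots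 x_{i_k}$; $\lambda$ is an eigenvalue if $\mathcal{T}x=\lambda x^{[k-1]}$ for some nonzero $x$, where $x^{[k-1]}=(x_1^{k-1},\dots,x_n^{k-1})^T$; $\rho(\mathcal{T})$ is the maximum modulus of eigenvalues. *)

(* Defs.v *)
From HB Require Import structures.
From mathcomp Require Import all_boot all_order all_algebra.
From mathcomp Require Import complex.
From mathcomp Require Import classical_sets reals.
Set Implicit Arguments. Unset Strict Implicit. Unset Printing Implicit Defensive.
Import Order.TTheory GRing.Theory Num.Theory.
Local Open Scope ring_scope.

Definition kuniform (n k : nat) (E : {set {set 'I_n}}) : Prop :=
  forall e, e \in E -> #|e| = k.

Arguments kuniform {n} k E.

Definition hadj (n : nat) (E : {set {set 'I_n}}) : rel 'I_n :=
  fun u v => [exists e in E, (u \in e) && (v \in e)].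

Definition hconnected (n : nat) (E : {set {set 'I_n}}) : Prop :=
  forall u v : 'I_n, connect (hadj E) u v.

Definition hdeg (n : nat) (E : {set {set 'I_n}}) (i : 'I_n) : nat :=
  #|[set e in E | i \in e]|.

(* An order-k, dimension-n tensor: entry T_{i i_2 ... i_k} = T i t
   where t : 'I_(k-1) -> 'I_n lists (i_2,...,i_k). *)
Definition tensor (R : Type) (n k : nat) := 'I_n -> {ffun 'I_k.-1 -> 'I_n} -> R.

Definition adj_tensor (R : fieldType) (n k : nat) (E : {set {set 'I_n}})
  : tensor R n k :=
  fun i t => if (i |: [set t j | j : 'I_k.-1]) \in E then ((k.-1)`!%:R)^-1 else 0.

Definition deg_tensor (R : fieldType) (n k : nat) (E : {set {set 'I_n}})
  : tensor R n k :=
  fun i t => if [forall j, t j == i] then (hdeg E i)%:R else 0.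

Arguments adj_tensor R {n} k E.
Arguments deg_tensor R {n} k E.

Definition signless_laplacian (R : fieldType) (n k : nat) (E : {set {set 'I_n}})
  : tensor R n k :=
  fun i t => deg_tensor R k E i t + adj_tensor R k E i t.

Arguments signless_laplacian R {n} k E.

Definition tensor_apply (R : fieldType) (n k : nat) (T : tensor R n k)
  (x : 'I_n -> R) (i : 'I_n) : R :=
  \sum_(t : {ffun 'I_k.-1 -> 'I_n}) T i t * \prod_(j : 'I_k.-1) x (t j).

Definition is_eigenvalue (R : rcfType) (n k : nat) (T : tensor R[i] n k)
  (lam : R[i]) : Prop :=
  exists x : 'I_n -> R[i], (exists i, x i != 0) /\
    forall i, tensor_apply T x i = lam * x i ^+ k.-1.

Definition spectral_radius (R : realType) (n k : nat) (T : tensor R[i] n k) : R :=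
  sup [set r : R | exists lam, is_eigenvalue T lam /\ r = ComplexField.Normc.normc lam].

Definition bprime (R : fieldType) (n k : nat) (E : {set {set 'I_n}})
  (b : 'I_n -> R) (p : 'I_n) : R :=
  (b p ^+ k.-1)^-1 * \sum_(e in E | p \in e) \prod_(q in e | q != p) b q.

Arguments bprime {R n} k E b p.

Definition theorem_bound (R : rcfType) (n k : nat) (E : {set {set 'I_n}})
  (b : 'I_n -> R) : R :=
  \big[Num.max/0]_(e in E) \big[Num.max/0]_(i in e) \big[Num.max/0]_(j in e | i != j)
    (((hdeg E i)%:R + (hdeg E j)%:R
      + Num.sqrt (((hdeg E i)%:R - (hdeg E j)%:R) ^+ 2
                  + 4 * bprime k E b i * bprime k E b j)) / 2).

(* Main.v *)
Require Import Defs.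
From HB Require Import structures.
From mathcomp Require Import all_boot all_order all_algebra.
From mathcomp Require Import complex.
From mathcomp Require Import classical_sets reals boolp.
From mathcomp Require Import ring lra.
Import Order.TTheory GRing.Theory Num.Theory.
Local Open Scope ring_scope.
Set Implicit Arguments. Unset Strict Implicit. Unset Printing Implicit Defensive.
Section Count.
Variables (n k : nat) (e : {set 'I_n}) (p : 'I_n).
Hypotheses (ek : #|e| = k) (pe : p \in e) (k1 : (1 <= k)%N).

Definition img (t : {ffun 'I_k.-1 -> 'I_n}) := [set t j | j : 'I_k.-1].

Lemma imgE t : img t = [set t x | x in [set: 'I_k.-1]].
Proof. by apply/setP=> z; apply/imsetP/imsetP => -[x _ ->]; exists x. Qed.

Lemma img_card t : (#|img t| <= k.-1)%N.
Proof. by rewrite imgE (leq_trans (leq_imset_card _ _)) // cardsT card_ord. Qed.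

Lemma img_char1 t : p |: img t = e -> injective t /\ img t = e :\ p.
Proof.
move=> He.
have h1 := img_card t.
have h2 := cardsU1 p (img t).
rewrite He ek in h2.
have pS : p \notin img t.
  apply/negP=> pS; move: h2 h1; rewrite pS /= add0n => <-.
  by case: k k1 => // k' _; rewrite ltnn.
split.
  move: h2 h1; rewrite pS /= add1n => h2 h1.
  have : #|[set t x | x in [set: 'I_k.-1]]| == #|[set: 'I_k.-1]|.
    by rewrite -imgE cardsT card_ord; move: h2; case: k k1 => // k' _ [->].
  move=> /imset_injP H x y; apply: H; by rewrite inE.
by rewrite -He finset.setU1K.
Qed.

Lemma img_char2 t : t \in ffun_on (mem (e :\ p)) -> injective t -> p |: img t = e.
Proof.
move=> /ffun_onP Ht It.
have Sub : img t \subset e :\ p.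

  by apply/fintype.subsetP=> z; rewrite /img => /imsetP [j _ ->]; exact: Ht.
have ce : #|e :\ p| = k.-1 by move: (cardsD1 p e); rewrite pe ek add1n => ->.
have ci : #|img t| = k.-1.
  by rewrite imgE card_imset // cardsT card_ord.
have : img t == e :\ p by rewrite eqEcard Sub ce ci leqnn.
by move/eqP->; rewrite finset.setD1K.
Qed.

Lemma count_img : #|[set t | p |: img t == e]| = (k.-1)`!.
Proof.
rewrite -ffactnn.
have := card_inj_ffuns_on 'I_k.-1 (mem (e :\ p)).
rewrite card_ord.
have -> : #|mem (e :\ p)| = k.-1 by rewrite -[#|mem _|]/#|e :\ p|; move: (cardsD1 p e); rewrite pe ek add1n => ->.
move=> <-; apply: eq_card => t; rewrite !inE.
apply/eqP/andP.
  move/img_char1 => [It Im]; split; last by apply/injectiveP.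
  by apply/ffun_onP => j; rewrite -Im; apply: imset_f.
by move=> [H /injectiveP I]; apply: img_char2.
Qed.
End Count.
Arguments img {n} k t.


Lemma adj_sum (F : numFieldType) n k E (z : 'I_n -> F) p :
  kuniform k E -> (1 <= k)%N ->
  \sum_t adj_tensor F k E p t * \prod_j z (t j) =
  \sum_(e in E | p \in e) \prod_(q in e | q != p) z q.
Proof.
move=> Hk k1; rewrite /adj_tensor.
transitivity ((k.-1)`!%:R^-1 * \sum_(t | p |: img k t \in E) \prod_j z (t j)).
  rewrite [in RHS]big_mkcond mulr_sumr; apply: eq_bigr => t _.
  by rewrite /img; case: ifP => _; rewrite ?mul0r ?mulr0.
rewrite (partition_big (fun t => p |: img k t) (fun e => (e \in E) && (p \in e))); last first.
  by move=> t ->; rewrite setU11.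
rewrite mulr_sumr; apply: eq_bigr => e /andP [eE pe].
have ek := Hk e eE.
transitivity ((k.-1)`!%:R^-1 * \sum_(t | p |: img k t == e) \prod_(q in e | q != p) z q).
  congr (_ * _); apply: eq_big => t.
    by case: eqP => [->|]; rewrite ?andbF ?eE.
  move=> /andP[_ /eqP H]; have [It Im] := img_char1 ek k1 H.
  have -> : \prod_(q in e | q != p) z q = \prod_(q in e :\ p) z q.
    by apply: eq_bigl => q; rewrite in_setD1 andbC.
  rewrite -Im imgE big_imset; last by move=> x y _ _; apply: It.
  by apply: eq_bigl => j; rewrite inE.
rewrite sumr_const.
have -> : #|[pred t : {ffun 'I_k.-1 -> 'I_n} | p |: img k t == e]| = (k.-1)`!.
  by rewrite -(count_img ek pe k1) cardsE.
rewrite mulrnAr -mulrnAl -[X in X * _]mulr_natr mulVf ?mul1r //.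
by rewrite pnatr_eq0 -lt0n fact_gt0.
Qed.

Lemma deg_sum (F : fieldType) n k E (x : 'I_n -> F) p :
  \sum_t deg_tensor F k E p t * \prod_j x (t j) = (hdeg E p)%:R * x p ^+ k.-1.
Proof.
rewrite (bigD1 [ffun=> p]) //= [X in _ + X]big1 ?addr0.
  rewrite /deg_tensor; case: ifP => [_|/negP []]; last first.
    by apply/fintype.forallP => j; rewrite ffunE.
  congr (_ * _); under eq_bigr do rewrite ffunE.
  by rewrite prodr_const cardT size_enum_ord.
move=> t tp; rewrite /deg_tensor; case: ifP; rewrite ?mul0r // => /fintype.forallP H.
have Ht : t = [ffun=> p] by apply/ffunP => j; rewrite ffunE; apply/eqP.
by rewrite Ht eqxx in tp.
Qed.

Lemma eig_eq (F : numFieldType) n k E (x : 'I_n -> F) p :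
  kuniform k E -> (1 <= k)%N ->
  tensor_apply (signless_laplacian F k E) x p =
  (hdeg E p)%:R * x p ^+ k.-1 + \sum_(e in E | p \in e) \prod_(q in e | q != p) x q.
Proof.
move=> Hk k1; rewrite /tensor_apply /signless_laplacian.
under eq_bigr do rewrite mulrDl.
by rewrite big_split /= deg_sum adj_sum.
Qed.

Section NormC.
Variable R : rcfType.
Local Notation nc := (@Normc.normc R).

Lemma nc_ge0 (z : R[i]) : 0 <= nc z.
Proof. by case: z => a b /=; rewrite sqrtr_ge0. Qed.

Lemma nc_expr (z : R[i]) m : nc (z ^+ m) = nc z ^+ m.
Proof.
elim: m => [|m IH]; first by rewrite !expr0 Normc.normc1.
by rewrite !exprS Normc.normcM IH.
Qed.

Lemma nc_prod (I : finType) (P : pred I) (f : I -> R[i]) :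
  nc (\prod_(i | P i) f i) = \prod_(i | P i) nc (f i).
Proof. exact: (big_morph nc (@Normc.normcM R) (@Normc.normc1 R)). Qed.

Lemma nc_sum (I : finType) (P : pred I) (f : I -> R[i]) :
  nc (\sum_(i | P i) f i) <= \sum_(i | P i) nc (f i).
Proof.
elim/big_rec2: _ => [|i y1 y2 _ H]; first by rewrite Normc.normc0.
apply: le_trans (le_normcD _ _) _; exact: lerD.
Qed.

Lemma nc_nat (m : nat) : nc (m%:R) = m%:R.
Proof. by rewrite (normcMn (1 : Rcomplex R)) Normc.normc1. Qed.

Lemma nc_eq0 (z : R[i]) : (nc z == 0) = (z == 0).
Proof.
apply/eqP/eqP => [/Normc.eq0_normc //|->]; exact: Normc.normc0.
Qed.
End NormC.

Local Notation nc := (@Normc.normc _).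

Lemma eig_ineq (R : rcfType) n k E (x : 'I_n -> R[i]) lam p :
  kuniform k E -> (1 <= k)%N ->
  (forall i, tensor_apply (signless_laplacian R[i] k E) x i = lam * x i ^+ k.-1) ->
  nc (lam - (hdeg E p)%:R) * nc (x p) ^+ k.-1 <=
  \sum_(e in E | p \in e) \prod_(q in e | q != p) nc (x q).
Proof.
move=> Hk k1 H.
have := H p; rewrite eig_eq // => Hp.
have Heq : (lam - (hdeg E p)%:R) * x p ^+ k.-1 =
    \sum_(e in E | p \in e) \prod_(q in e | q != p) x q.
  by rewrite mulrBl -Hp addrAC subrr add0r.
rewrite -nc_expr -Normc.normcM Heq.
apply: le_trans (nc_sum _ _) _; under eq_bigr do rewrite nc_prod; exact: lexx.
Qed.

Section Bmax.
Variable R : rcfType.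
Lemma le_bmax_seq (I : eqType) (s : seq I) (F : I -> R) i0 :
  i0 \in s -> F i0 <= \big[Num.max/0]_(i <- s) F i.
Proof.
elim: s => [//|x s IH]; rewrite inE big_cons => /orP[/eqP->|/IH H].
  by rewrite le_max lexx.
by rewrite le_max H orbT.
Qed.

Lemma le_bmax (I : finType) (P : pred I) (F : I -> R) i0 :
  P i0 -> F i0 <= \big[Num.max/0]_(i <- index_enum I | P i) F i.
Proof.
move=> Pi; rewrite -big_filter; apply: le_bmax_seq.
by rewrite mem_filter Pi mem_index_enum.
Qed.

Lemma bmax_ge0 (I : Type) (s : seq I) (P : pred I) (F : I -> R) :
  0 <= \big[Num.max/0]_(i <- s | P i) F i.
Proof.
elim: s => [|x s IH]; rewrite ?big_nil ?big_cons //.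
by case: ifP => _ //; rewrite le_max IH orbT.
Qed.
End Bmax.
Arguments le_bmax {R I} P F i0.
Arguments bmax_ge0 {R I} s P F.

Section RealPart.
Variables (R : rcfType) (n k : nat) (E : {set {set 'I_n}}) (b a : 'I_n -> R) (lam : R[i]).
Hypotheses (k2 : (2 <= k)%N) (Hk : kuniform k E) (bpos : forall i, 0 < b i)
  (age0 : forall i, 0 <= a i)
  (Hin : forall p, nc (lam - (hdeg E p)%:R) * a p ^+ k.-1 <=
          \sum_(e in E | p \in e) \prod_(q in e | q != p) a q).

Let y i := a i / b i.

Lemma y_ge0 i : 0 <= y i.
Proof. by rewrite /y divr_ge0 // ltW. Qed.

Lemma ay i : a i = b i * y i.
Proof. by rewrite /y mulrCA mulfV ?mulr1 // gt_eqF. Qed.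

Lemma card_ev e v : e \in E -> v \in e -> #|e :\ v| = k.-1.
Proof. by move=> eE ve; move: (cardsD1 v e); rewrite ve Hk // add1n => ->. Qed.

Lemma step v M : 0 <= M ->
  (forall e q, e \in E -> v \in e -> q \in e -> q != v -> y q <= M) ->
  nc (lam - (hdeg E v)%:R) * y v ^+ k.-1 <= bprime k E b v * M ^+ k.-1.
Proof.
move=> M0 HM.
have B0 : 0 < b v ^+ k.-1 by rewrite exprn_gt0.
rewrite -(ler_pM2l B0).
have -> : b v ^+ k.-1 * (nc (lam - (hdeg E v)%:R) * y v ^+ k.-1) =
   nc (lam - (hdeg E v)%:R) * a v ^+ k.-1 by rewrite mulrCA -exprMn -ay.
have -> : b v ^+ k.-1 * (bprime k E b v * M ^+ k.-1) =
   (\sum_(e in E | v \in e) \prod_(q in e | q != v) b q) * M ^+ k.-1.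
  by rewrite /bprime mulrA mulVKf // gt_eqF.
apply: le_trans (Hin v) _.
rewrite mulr_suml; apply: ler_sum => e /andP[eE ve].
have -> : (\prod_(q in e | q != v) b q) * M ^+ k.-1 = \prod_(q in e | q != v) (b q * M).
  rewrite big_split /=; congr (_ * _).
  rewrite -(card_ev eE ve) -prodr_const; apply: eq_bigl => q.
  by rewrite in_setD1 andbC.
apply: ler_prod => q /andP[qe qv]; rewrite age0 /= ay.
apply: ler_wpM2l; [exact: ltW | exact: (HM e q eE ve qe qv)].
Qed.

Lemma bp_ge0 v : 0 <= bprime k E b v.
Proof.
rewrite /bprime; apply: mulr_ge0; first by rewrite invr_ge0 exprn_ge0 // ltW.
by apply: sumr_ge0 => e _; apply: prodr_ge0 => q _; exact: ltW.
Qed.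

Lemma final_ineq (r dp dq cp cq bp bq : R) :
  0 <= dp -> 0 <= dq -> 0 <= cp -> 0 <= cq -> 0 <= bp -> 0 <= bq ->
  r <= cp + dp -> r <= cq + dq -> cp * cq <= bp * bq ->
  r <= (dp + dq + Num.sqrt ((dp - dq) ^+ 2 + 4 * bp * bq)) / 2.
Proof.
move=> dp0 dq0 cp0 cq0 bp0 bq0 h1 h2 h3.
have D0 : 0 <= (dp - dq) ^+ 2 + 4 * bp * bq.
  by rewrite addr_ge0 ?sqr_ge0 // !mulr_ge0.
set s := Num.sqrt _.
have hs : s ^+ 2 = (dp - dq) ^+ 2 + 4 * bp * bq by rewrite sqr_sqrtr.
have s0 : 0 <= s by rewrite sqrtr_ge0.
have hs1 : dp - dq <= s by nra.
have hs2 : dq - dp <= s by nra.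
rewrite ler_pdivlMr //.
case: (lerP r dp) => hrp; first by lra.
case: (lerP r dq) => hrq; first by lra.
have h4 : (r - dp) * (r - dq) <= cp * cq.
  by apply: ler_pM; lra.
nra.
Qed.

Lemma real_main : (exists i, a i != 0) -> nc lam <= theorem_bound k E b.
Proof.
case=> i0 ai0.
have [p _ Hp] := @arg_maxP _ _ _ i0 xpredT y isT.
have yp : 0 < y p.
  apply: lt_le_trans (Hp i0 isT).
  by rewrite /y divr_gt0 // lt_def ai0 age0.
have m1 : (0 < k.-1)%N by case: k k2 => // [] [].
have ypm : 0 < y p ^+ k.-1 by rewrite exprn_gt0.
have bnd0 : 0 <= theorem_bound k E b by rewrite /theorem_bound; exact: bmax_ge0.
have tri v : nc lam <= nc (lam - (hdeg E v)%:R) + (hdeg E v)%:R.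
  by have := le_normcD (lam - (hdeg E v)%:R) (hdeg E v)%:R; rewrite subrK nc_nat.
case: (boolP [exists e in E, p \in e]) => [/fintype.existsP [e0 /andP[e0E pe0]] | noe].
  have : (0 < #|e0 :\ p|)%N by rewrite (card_ev e0E pe0).
  case/card_gt0P => q0; rewrite in_setD1 => /andP[q0p q0e].
  pose NB := fun q => [exists e in E, (p \in e) && (q \in e)] && (q != p).
  have NBq0 : NB q0.
    by rewrite /NB q0p andbT; apply/fintype.existsP; exists e0; rewrite e0E pe0 q0e.
  have [q NBq Hq] := @arg_maxP _ _ _ q0 NB y NBq0.
  case/andP: NBq => /fintype.existsP [e /andP[eE /andP[pe qe]]] qp.
  have S1 := @step p (y q) (y_ge0 q) (fun e' q' e'E pe' q'e q'p =>
     Hq q' (introT andP (conj (introT (@fintype.existsP _ _) (ex_intro _ e'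
        (introT and3P (And3 e'E pe' q'e)))) q'p))).
  have S2 := @step q (y p) (ltW yp) (fun e' q' _ _ _ _ => Hp q' isT).
  pose cp := nc (lam - (hdeg E p)%:R); pose cq := nc (lam - (hdeg E q)%:R).
  have Hprod : cp * cq <= bprime k E b p * bprime k E b q.
    case: (eqVneq (y q) 0) => [yq0|yqn0].
      have cp0 : cp <= 0.
        rewrite -(pmulr_lle0 _ ypm); apply: (le_trans S1).
        by rewrite yq0 expr0n eqn0Ngt m1 /= mulr0.
      apply: le_trans (mulr_le0_ge0 cp0 (nc_ge0 _)) _.
      by rewrite mulr_ge0 ?bp_ge0.
    have yq : 0 < y q by rewrite lt_def yqn0 y_ge0.
    have yqm : 0 < y q ^+ k.-1 by rewrite exprn_gt0.
    have := ler_pM (mulr_ge0 (nc_ge0 _) (ltW ypm)) (mulr_ge0 (nc_ge0 _) (ltW yqm)) S1 S2.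
    move=> H; rewrite -(ler_pM2r (mulr_gt0 ypm yqm)) /cp /cq.
    apply: le_trans (le_trans _ H) _.
      by rewrite le_eqVlt; apply/orP; left; apply/eqP; ring.
    by rewrite le_eqVlt; apply/orP; left; apply/eqP; ring.
  apply: le_trans (final_ineq _ _ (nc_ge0 _) (nc_ge0 _) (bp_ge0 p) (bp_ge0 q)
     (tri p) (tri q) Hprod) _; rewrite ?ler0n //.
  rewrite /theorem_bound.
  eapply le_trans; last exact: (le_bmax (fun e => e \in E) _ _ eE).
  eapply le_trans; last exact: (le_bmax (fun i => i \in e) _ _ pe).
  have pq : (q \in e) && (p != q) by rewrite qe eq_sym qp.
  exact: (le_bmax (fun j => (j \in e) && (p != j)) _ _ pq).
have S0 : \sum_(e in E | p \in e) \prod_(q in e | q != p) a q = 0.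
  rewrite big_pred0 // => e; apply/negbTE; apply: contra noe => H.
  by apply/fintype.existsP; exists e.
have d0 : hdeg E p = 0%N.
  rewrite /hdeg; apply: eq_card0 => e; rewrite inE; apply/negbTE.
  by apply: contra noe => H; apply/fintype.existsP; exists e.
have H := Hin p; rewrite S0 d0 subr0 pmulr_lle0 in H; last first.
  by rewrite exprn_gt0 // ay mulr_gt0.
exact: le_trans H bnd0.
Qed.
End RealPart.

Theorem theorem2p2 (R : realType) (n k : nat) (E : {set {set 'I_n}})
  (b : 'I_n -> R) :
  (2 <= k)%N -> kuniform k E -> hconnected E ->
  (forall i, 0 < b i) ->
  spectral_radius (signless_laplacian R[i] k E)
    <= theorem_bound k E b.
Proof.
move=> k2 Hk _ bpos.
have k1 : (1 <= k)%N by apply: leq_trans k2.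
rewrite /spectral_radius.
set S := (X in sup X <= _).
have ub : forall r, S r -> r <= theorem_bound k E b.
  move=> r [lam [[x [[i0 xi0] Heig]] ->]].
  apply: (@real_main R n k E b (fun i => nc (x i)) lam k2 Hk bpos).
  - by move=> i; exact: nc_ge0.
  - by move=> p; apply: eig_ineq.
  - by exists i0; rewrite nc_eq0.
case: (pselect (S !=set0)%classic) => [ne|e0].
  by apply: ge_sup ne ub.
have -> : S = set0%classic.
  by apply/seteqP; split => r Sr //; exfalso; apply: e0; exists r.
by rewrite sup0 /theorem_bound; exact: bmax_ge0.
Qed.
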